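(* Fix positive constants $r$, $C_{\chi^2}$, $C_{\mathsf{TV}}$, $C_{8\to2}$ and $B$, and suppose $\mathscr F_\star$ is $B$-bounded. Suppose the process $\{X_t\}$ has a stationary distribution $\pi$, that its marginals $\{\mu_t\}$ are absolutely continuous w.r.t. $\pi$, and that $$\sup_{t\in\mathbb N}\chi^2(\mu_t,\pi)\le C_{\chi^2},\qquad \frac1T\sum_{t=0}^{T-1}\|\mu_t-\pi\|_{\mathsf{TV}}\le C_{\mathsf{TV}}r^2.$$ Suppose also that $\mathbb{E}_{\pi}\|f(X)\|_2^8\le C_{8\to2}(\mathbb{E}_\pi\|f(X)\|_2^2)^4$ for all $f\in\mathscr F_\star$. Then $(\partial B(r),\mathsf P_X)$ satisfies the trajectory $(C,2)$-hypercontractivity condition with $C=(1+\sqrt{C_{\chi^2}})\sqrt{C_{8\to2}}(1+C_{\mathsf{TV}}B^2)^2$.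
   Context: $\{X_t\}_{t\ge0}$ is a process in $\mathsf X\subset\mathbb R^{d_x}$ with marginals $X_t\sim\mu_t$; $\mathsf P_X$ is the joint law of $X_{0:T-1}$. $\mathscr F_\star$ is a class of functions $\mathsf X\to\mathbb R^{d_y}$; $B$-bounded means $\sup_x\|f(x)\|_2\le B$ for all $f\in\mathscr F_\star$. $\|f\|_{L^2}^2=\frac1T\sum_{t=0}^{T-1}\mathbb{E}\|f(X_t)\|_2^2$, $\partial B(r)=\{f\in\mathscr F_\star:\|f\|_{L^2}=r\}$. $\chi^2(\mu,\nu)=\mathbb{E}_\nu[(\frac{d\mu}{d\nu}-1)^2]$ for $\mu\ll\nu$; $\|\mu-\nu\|_{\mathsf{TV}}=\sup_A|\mu(A)-\nu(A)|$. Trajectory $(C,\alpha)$-hypercontractivity of $(\mathscr G,\mathsf P_X)$: $\mathbb{E}[\frac1T\sum_t\|f(X_t)\|_2^4]\le C(\mathbb{E}[\frac1T\sum_t\|f(X_t)\|_2^2])^\alpha$ for all $f\in\mathscr G$. *)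

(* Defs.v *)
From HB Require Import structures.
From mathcomp Require Import all_boot all_order all_algebra.
From mathcomp Require Import all_classical all_reals all_analysis.
Set Implicit Arguments. Unset Strict Implicit. Unset Printing Implicit Defensive.
Import Order.TTheory GRing.Theory Num.Theory.
Import numFieldNormedType.Exports.
Local Open Scope classical_set_scope.
Local Open Scope ring_scope.

Definition norm2 {R : realType} {dy : nat} (v : 'rV[R]_dy) : R :=
  Num.sqrt (\sum_(i < dy) v ord0 i ^+ 2).

Definition chi2 {d} {S : measurableType d} {R : realType}
  (mu nu : probability S R) : \bar R :=
  (\int[nu]_x (Radon_Nikodym (charge_of_finite_measure mu) nu x - 1%:E) ^+ 2)%E.

Definition tv {d} {S : measurableType d} {R : realType}
  (mu nu : probability S R) : \bar R :=
  ereal_sup [set `|(mu A - nu A)%E|%E | A in measurable].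

Definition L2sq {dO dS} {Omega : measurableType dO} {S : measurableType dS}
  {R : realType} {dy : nat} (P : probability Omega R) (X : nat -> Omega -> S)
  (T : nat) (f : S -> 'rV[R]_dy) : \bar R :=
  ((T%:R^-1)%:E * \sum_(t < T) \int[P]_w ((norm2 (f (X t w))) ^+ 2)%:E)%E.

Definition L2norm {dO dS} {Omega : measurableType dO} {S : measurableType dS}
  {R : realType} {dy : nat} (P : probability Omega R) (X : nat -> Omega -> S)
  (T : nat) (f : S -> 'rV[R]_dy) : R :=
  Num.sqrt (fine (L2sq P X T f)).

Definition sphere {dO dS} {Omega : measurableType dO} {S : measurableType dS}
  {R : realType} {dy : nat} (P : probability Omega R) (X : nat -> Omega -> S)
  (T : nat) (F : set (S -> 'rV[R]_dy)) (r : R) : set (S -> 'rV[R]_dy) :=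
  [set f | F f /\ L2norm P X T f = r].

(* trajectory (C, alpha)-hypercontractivity of (G, P_X), with P_X the law of
   X_{0:T-1} on the underlying probability space P *)
Definition traj_hypercontractive {dO dS} {Omega : measurableType dO}
  {S : measurableType dS} {R : realType} {dy : nat}
  (G : set (S -> 'rV[R]_dy)) (P : probability Omega R) (X : nat -> Omega -> S)
  (T : nat) (C alpha : R) : Prop :=
  forall f, G f ->
    (\int[P]_w ((T%:R^-1 * \sum_(t < T) norm2 (f (X t w)) ^+ 4)%:E)
     <= C%:E * poweR (\int[P]_w ((T%:R^-1 * \sum_(t < T) norm2 (f (X t w)) ^+ 2)%:E)) alpha)%E.

(* Main.v *)
Require Import Defs.
From HB Require Import structures.
From mathcomp Require Import all_boot all_order all_algebra.
From mathcomp Require Import all_classical all_reals all_analysis.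
From mathcomp Require Import ring lra measurable_realfun.
Set Implicit Arguments. Unset Strict Implicit. Unset Printing Implicit Defensive.
Import Order.TTheory GRing.Theory Num.Theory.
Import numFieldNormedType.Exports.
Local Open Scope classical_set_scope.
Local Open Scope ring_scope.
Lemma amgm (R : realType) (l u w : R) : 0 < l -> u * w <= l * u ^+ 2 / 2 + w ^+ 2 / (2 * l).
Proof.
move=> l0.
have h : 0 <= (l * u - w) ^+ 2 / (2 * l) by rewrite divr_ge0 // ?sqr_ge0 // mulr_ge0 // ltW.
have e : (l * u - w) ^+ 2 / (2 * l) = l * u ^+ 2 / 2 + w ^+ 2 / (2 * l) - u * w.
  by field; rewrite lt0r_neq0.
by rewrite -subr_ge0 -e.
Qed.

Lemma bnd_int d (T : measurableType d) (R : realType) (mu : probability T R)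
  (g : T -> R) (M : R) : measurable_fun setT g -> (forall x, 0 <= g x <= M) ->
  (\int[mu]_x (g x)%:E = (fine (\int[mu]_x (g x)%:E))%:E)%E /\
  0 <= fine (\int[mu]_x (g x)%:E) <= M.
Proof.
move=> mg gb.
have i0 : (0 <= \int[mu]_x (g x)%:E)%E.
  by apply: integral_ge0 => x _; rewrite lee_fin; case/andP: (gb x).
have iM : (\int[mu]_x (g x)%:E <= M%:E)%E.
  have -> : (M%:E = \int[mu]_x (cst M%:E) x)%E.
    by rewrite integral_cst // -[LHS]mule1; congr (_ * _)%E; exact/esym/probability_setT.
  apply: ge0_le_integral => //.
  - by move=> x _; rewrite lee_fin; case/andP: (gb x).
  - exact/measurable_EFinP.
  - by move=> x _; rewrite lee_fin; case/andP: (gb x).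
have fin : (\int[mu]_x (g x)%:E)%E \is a fin_num.
  by rewrite ge0_fin_numE //; exact: (le_lt_trans iM (ltry _)).
split; first by rewrite fineK.
by rewrite -[X in X && _]lee_fin -[X in _ && X]lee_fin fineK // i0 iM.
Qed.

Lemma rn_facts d (S : measurableType d) (R : realType) (mu pi : probability S R) :
  mu `<< pi -> exists gr : S -> R,
  [/\ measurable_fun setT gr, (forall x, 0 <= gr x),
   (forall phi : S -> \bar R, measurable_fun setT phi -> (forall x, 0 <= phi x)%E ->
      \int[pi]_x (phi x * (gr x)%:E) = \int[mu]_x phi x)%E,
   (forall A, measurable A -> mu A = \int[pi]_(x in A) (gr x)%:E)%E &
   chi2 mu pi = (\int[pi]_x ((gr x - 1) ^+ 2)%:E)%E].
Proof.
move=> mupi.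
pose g0 := Radon_Nikodym_SigmaFinite.f mu pi.
have g0fin x : g0 x \is a fin_num by exact: Radon_Nikodym_SigmaFinite.f_fin_num.
have g0ge0 x : (0 <= g0 x)%E by exact: Radon_Nikodym_SigmaFinite.f_ge0.
have mg0 : measurable_fun setT g0.
  exact: measurable_int (Radon_Nikodym_SigmaFinite.f_integrable mupi).
have g0E x : g0 x = (fine (g0 x))%:E by rewrite fineK.
exists (fine \o g0); split.
- exact: measurableT_comp.
- by move=> x; rewrite /= -lee_fin -g0E.
- move=> phi mphi phi0.
  rewrite -(Radon_Nikodym_SigmaFinite.change_of_variables mupi phi0 measurableT) //.
  by apply: eq_integral => x _ /=; rewrite -g0E.
- move=> A mA; rewrite (Radon_Nikodym_SigmaFinite.f_integral mupi mA).
  by apply: eq_integral => x _ /=; rewrite -g0E.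
- rewrite /chi2.
  have ae := ae_eq_Radon_Nikodym_SigmaFinite mupi (@measurableT _ S).
  rewrite (@ae_eq_integral _ _ _ pi setT (fun x => (g0 x - 1%:E) ^+ 2)%E) //.
  + by apply: eq_integral => x _ /=; rewrite g0E -EFinB -EFinM expr2.
  + rewrite /=; apply: emeasurable_funM; apply: emeasurable_funD => //.
  + under eq_fun do rewrite expe2.
    by apply: emeasurable_funM; apply: emeasurable_funD.
  + apply: ae_eq_sym; move: ae; apply: filterS => x Hx Tx.
    by rewrite /g0 Hx.
Qed.

Lemma step1 d (S : measurableType d) (R : realType) (mu pi : probability S R)
  (a : S -> R) (B2 c l1 l2 : R) :
  measurable_fun setT a -> (forall x, 0 <= a x <= B2) -> mu `<< pi ->
  (chi2 mu pi <= c%:E)%E -> 0 < l1 -> 0 < l2 ->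
  fine (\int[mu]_x (a x ^+ 2)%:E)%E <=
    1 / (2 * l1) + (l1 / 2 + l2 / 2) * fine (\int[pi]_x (a x ^+ 4)%:E)%E + c / (2 * l2).
Proof.
move=> ma ab mupi hchi l10 l20.
have [gr [mgr gr0 cov rnA chiE]] := rn_facts mupi.
have a0 x : 0 <= a x by case/andP: (ab x).
have ma2 : measurable_fun setT (fun x => a x ^+ 2) by exact: measurable_funX.
have ma4 : measurable_fun setT (fun x => a x ^+ 4) by exact: measurable_funX.
have abn n x : 0 <= a x ^+ n <= B2 ^+ n.
  case/andP: (ab x) => h1 h2; rewrite exprn_ge0 //=.
  by apply: lerXn2r => //; rewrite nnegrE // (le_trans h1 h2).
have [m2E _] := bnd_int mu ma2 (abn 2%N).
have [p4E _] := bnd_int pi ma4 (abn 4%N).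
have mg1 : measurable_fun setT (fun x => (gr x - 1) ^+ 2).
  by apply: measurable_funX; apply: measurable_funB.
have chi0 : (0 <= chi2 mu pi)%E by rewrite chiE; apply: integral_ge0 => x _; rewrite lee_fin sqr_ge0.
have chifin : chi2 mu pi = (fine (chi2 mu pi))%:E.
  by rewrite fineK // ge0_fin_numE // (le_lt_trans hchi (ltry _)).
have chic : fine (chi2 mu pi) <= c by rewrite -lee_fin -chifin.
suff H : (\int[mu]_x (a x ^+ 2)%:E <=
   (1 / (2 * l1))%:E + (l1 / 2 + l2 / 2)%:E * \int[pi]_x (a x ^+ 4)%:E
   + (1 / (2 * l2))%:E * chi2 mu pi)%E.
  move: H; rewrite m2E p4E chifin -!EFinM -!EFinD lee_fin => H.
  apply: (le_trans H); rewrite lerD2l mul1r mulrC ler_wpM2r //.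
  by rewrite invr_ge0 mulr_ge0 // ltW.
rewrite -cov //; last by move=> x; rewrite lee_fin exprn_ge0.
2: exact/measurable_EFinP.
rewrite chiE.
have mc (k : R) : measurable_fun setT (fun _ : S => k%:E) by exact: measurable_cst.
have q1 : 0 <= 1 / (2 * l1) by rewrite divr_ge0 // mulr_ge0 // ltW.
have q2 : 0 <= l1 / 2 + l2 / 2 by rewrite addr_ge0 // divr_ge0 // ltW.
have q3 : 0 <= 1 / (2 * l2) by rewrite divr_ge0 // mulr_ge0 // ltW.
have mA4 : measurable_fun setT (fun x => (a x ^+ 4)%:E) by exact/measurable_EFinP.
have mG : measurable_fun setT (fun x => ((gr x - 1) ^+ 2)%:E) by exact/measurable_EFinP.
have eqR : ((1 / (2 * l1))%:E + (l1 / 2 + l2 / 2)%:E * \int[pi]_x (a x ^+ 4)%:E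
   + (1 / (2 * l2))%:E * \int[pi]_x ((gr x - 1) ^+ 2)%:E =
   \int[pi]_x ((1 / (2 * l1))%:E + (l1 / 2 + l2 / 2)%:E * (a x ^+ 4)%:E
   + (1 / (2 * l2))%:E * ((gr x - 1) ^+ 2)%:E))%E.
  rewrite ge0_integralD //; last 4 first.
  - by move=> x _; rewrite -EFinM -EFinD lee_fin addr_ge0 // mulr_ge0 // exprn_ge0.
  - by apply: emeasurable_funD => //; apply: emeasurable_funM.
  - by move=> x _; rewrite -EFinM lee_fin mulr_ge0 // sqr_ge0.
  - by apply: emeasurable_funM.
  rewrite ge0_integralD //; try solve [by move=> x _; rewrite -?EFinM lee_fin ?mulr_ge0 ?exprn_ge0 | by apply: emeasurable_funM].
  rewrite integral_cst // ge0_integralZl //; try solve [by move=> x _; rewrite lee_fin exprn_ge0 | by rewrite lee_fin].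
  rewrite ge0_integralZl //; try solve [by move=> x _; rewrite lee_fin sqr_ge0 | by rewrite lee_fin].
  rewrite [X in (_ = _ * X + _ + _)%E](_ : _ = 1%E) ?mule1 //.
  exact: probability_setT.
rewrite eqR; apply: ge0_le_integral => //.
- by move=> x _; rewrite -EFinM lee_fin mulr_ge0 // exprn_ge0.
- by apply: emeasurable_funM => //; exact/measurable_EFinP.
- by apply: emeasurable_funD => //; [apply: emeasurable_funD => // | ]; apply: emeasurable_funM.
move=> x _; rewrite -!EFinM -!EFinD lee_fin.
have h1 := amgm (a x ^+ 2) 1 l10.
have h2 := amgm (a x ^+ 2) (gr x - 1) l20.
have e1 : a x ^+ 2 * gr x = a x ^+ 2 * 1 + a x ^+ 2 * (gr x - 1) by ring.
have e2 : a x ^+ 4 = (a x ^+ 2) ^+ 2 by rewrite -exprM.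
rewrite e1 e2; apply: (le_trans (lerD h1 h2)).
rewrite le_eqVlt; apply/orP; left; apply/eqP; field.
by rewrite !lt0r_neq0.
Qed.

Lemma opt (R : realType) (m2 p4 p1 c C82 : R) : 0 < c -> 0 <= C82 -> 0 <= p4 ->
  p4 <= C82 * p1 ^+ 4 ->
  (forall l1 l2, 0 < l1 -> 0 < l2 ->
     m2 <= 1 / (2 * l1) + (l1 / 2 + l2 / 2) * p4 + c / (2 * l2)) ->
  m2 <= (1 + Num.sqrt c) * Num.sqrt C82 * p1 ^+ 2.
Proof.
move=> c0 C0 p40 p4le H.
set s := Num.sqrt c. have s0 : 0 < s by rewrite sqrtr_gt0.
set K := Num.sqrt C82 * p1 ^+ 2.
have K0 : 0 <= K by rewrite mulr_ge0 ?sqrtr_ge0 ?sqr_ge0.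
have p4K : p4 <= K ^+ 2 by rewrite exprMn sqr_sqrtr // -exprM.
rewrite -mulrA -/K; apply/ler_addgt0Pr => e e0.
have s1 : 0 < 1 + s by rewrite addr_gt0.
set L := K + e / (1 + s).
have L0 : 0 < L by rewrite ltr_wpDl // divr_gt0.
have KL : K <= L by rewrite lerDl divr_ge0 // ltW.
have := H (1 / L) (s / L) (divr_gt0 ltr01 L0) (divr_gt0 s0 L0).
have E1 : 1 / (2 * (1 / L)) = L / 2 by field; rewrite lt0r_neq0.
have E3 : c / (2 * (s / L)) = s * L / 2.
  by rewrite -(sqr_sqrtr (ltW c0)) -/s; field; rewrite !lt0r_neq0.
have E2 : (1 / L / 2 + s / L / 2) * p4 <= (1 + s) * L / 2.
  have -> : 1 / L / 2 + s / L / 2 = (1 + s) / (2 * L) by field; rewrite lt0r_neq0.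
  apply: (le_trans (y := (1 + s) / (2 * L) * L ^+ 2)).
    apply: ler_wpM2l; first by rewrite divr_ge0 ?mulr_ge0 ?ltW.
    apply: (le_trans p4K); apply: lerXn2r => //; rewrite nnegrE ?ltW //.
  by rewrite le_eqVlt; apply/orP; left; apply/eqP; field; rewrite lt0r_neq0.
rewrite E1 E3 => h; apply: (le_trans h).
have -> : (1 + s) * K + e = (1 + s) * L by rewrite /L; field; rewrite lt0r_neq0.
have -> : (1 + s) * L = L / 2 + (1 + s) * L / 2 + s * L / 2 by field.
by rewrite lerD2r lerD2l.
Qed.

Lemma prob01 d (S : measurableType d) (R : realType) (mu : probability S R) A :
  measurable A -> mu A = (fine (mu A))%:E /\ 0 <= fine (mu A) <= 1.
Proof.
move=> mA; have f : mu A \is a fin_num by exact: fin_num_measure.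
split; first by rewrite fineK.
by rewrite -[X in X && _]lee_fin -[X in _ && X]lee_fin fineK // measure_ge0 probability_le1.
Qed.

Lemma tv_bounds d (S : measurableType d) (R : realType) (mu pi : probability S R) :
  (0 <= tv mu pi)%E /\ (tv mu pi <= 1)%E.
Proof.
split.
  have : (`|mu set0 - pi set0| <= tv mu pi)%E by apply: ereal_sup_ubound; exists set0.
  by rewrite !measure0 subee // abse0.
apply: ge_ereal_sup => y [A mA <-].
have [-> /andP[m0 m1]] := prob01 mu mA.
have [-> /andP[p0 p1]] := prob01 pi mA.
rewrite -EFinB /= lee_fin ler_norml; apply/andP; split; lra.
Qed.

Lemma step2 d (S : measurableType d) (R : realType) (mu pi : probability S R)
  (a : S -> R) (B2 : R) :
  measurable_fun setT a -> 0 <= B2 -> (forall x, 0 <= a x <= B2) -> mu `<< pi ->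
  (\int[pi]_x (a x)%:E <= \int[mu]_x (a x)%:E + B2%:E * tv mu pi)%E.
Proof.
move=> ma B0 ab mupi.
have [gr [mgr gr0 cov rnA chiE]] := rn_facts mupi.
have a0 x : 0 <= a x by case/andP: (ab x).
pose A := [set: S] `&` gr @^-1` `]-oo, 1[.
have mA : measurable A by exact: mgr.
have Ax x : A x <-> gr x < 1 by rewrite /A /= in_itv /=; split => [[_ ->]|->].
pose k := (fun x => (1 - gr x)%:E) \_ A.
have k0 x : (0 <= k x)%E.
  rewrite /k /patch; case: ifPn => // /set_mem /Ax h; rewrite lee_fin subr_ge0 ltW //.
have mk : measurable_fun setT k.
  apply/(measurable_restrictT _ mA).
  apply/measurable_EFinP; apply: measurable_funB => //; exact: measurable_funTS.
have kA : (\int[pi]_x k x <= tv mu pi)%E.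
  rewrite /k -integral_mkcond.
  have e : (\int[pi]_(x in A) (1 - gr x)%:E + \int[pi]_(x in A) (gr x)%:E = pi A)%E.
    rewrite -ge0_integralD //; last 4 first.
    - by move=> x /Ax h; rewrite lee_fin subr_ge0 ltW.
    - by apply/measurable_EFinP; apply: measurable_funB => //; exact: measurable_funTS.
    - by move=> x _; rewrite lee_fin.
    - by apply/measurable_EFinP; exact: measurable_funTS.
    rewrite (eq_integral (fun _ => 1%E)); last by move=> x _; rewrite -EFinD subrK.
    by rewrite integral_cst // mul1e.
  rewrite -rnA // in e.
  have [mE _] := prob01 mu mA.
  have [pE _] := prob01 pi mA.
  have -> : (\int[pi]_(x in A) (1 - gr x)%:E = pi A - mu A)%E.
    rewrite -e addeK //; exact: fin_num_measure.
  apply: le_trans (_ : `|mu A - pi A| <= _)%E; last by apply: ereal_sup_ubound; exists A.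
  by rewrite mE pE -!EFinB /= lee_fin -normrN opprB ler_norm.
apply: (le_trans (y := \int[pi]_x ((a x)%:E * (gr x)%:E + B2%:E * k x))%E).
  apply: ge0_le_integral => //.
  - by move=> x _; rewrite lee_fin.
  - exact/measurable_EFinP.
  - apply: emeasurable_funD => //; last exact: emeasurable_funM.
    by apply: emeasurable_funM; exact/measurable_EFinP.
  move=> x _; rewrite /k /patch; case: ifPn => [/set_mem /Ax h|/negP hA].
    rewrite -!EFinM -EFinD lee_fin.
    have : a x * (1 - gr x) <= B2 * (1 - gr x).
      by apply: ler_wpM2r; [rewrite subr_ge0 ltW | case/andP: (ab x)].
    by rewrite mulrBr mulr1 => h2; rewrite -subr_ge0; rewrite -subr_ge0 in h2; lra.
  have h : 1 <= gr x.
    by rewrite leNgt; apply/negP => h; apply: hA; apply/mem_set/Ax.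
  by rewrite mule0 adde0 -EFinM lee_fin ler_peMr.
rewrite ge0_integralD //; last 4 first.
- by move=> x _; rewrite -EFinM lee_fin mulr_ge0.
- by apply: emeasurable_funM; exact/measurable_EFinP.
- by move=> x _; rewrite mule_ge0.
- exact: emeasurable_funM.
rewrite cov //; last exact/measurable_EFinP.
rewrite ge0_integralZl //.
by rewrite leeD2l // lee_wpmul2l // lee_fin.
Qed.

Lemma avg_int dO dS (Omega : measurableType dO) (S : measurableType dS) (R : realType)
  (P : probability Omega R) (X : nat -> {mfun Omega >-> S}) (T : nat)
  (phi : S -> R) (M : R) :
  measurable_fun setT phi -> (forall y, 0 <= phi y <= M) ->
  (\int[P]_w ((T%:R^-1 * \sum_(t < T) phi (X t w))%:E) =
     (T%:R^-1 * \sum_(t < T) fine (\int[distribution P (X t)]_y (phi y)%:E))%:E)%E /\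
  ((T%:R^-1)%:E * \sum_(t < T) \int[P]_w (phi (X t w))%:E =
     (T%:R^-1 * \sum_(t < T) fine (\int[distribution P (X t)]_y (phi y)%:E))%:E)%E.
Proof.
move=> mphi phib.
have phi0 y : 0 <= phi y by case/andP: (phib y).
have mX t : measurable_fun setT (fun w => (phi (X t w))%:E).
  by apply/measurable_EFinP; apply: measurableT_comp => //.
have ht t : (\int[P]_w (phi (X t w))%:E =
             (fine (\int[distribution P (X t)]_y (phi y)%:E))%:E)%E.
  have := @ge0_integral_distribution _ _ _ _ _ P (X t) (fun y => (phi y)%:E).
  move=> <- //; last exact/measurable_EFinP.
  exact: (bnd_int _ mphi phib).1.
have e2 : ((T%:R^-1)%:E * \sum_(t < T) \int[P]_w (phi (X t w))%:E =
     (T%:R^-1 * \sum_(t < T) fine (\int[distribution P (X t)]_y (phi y)%:E))%:E)%E.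
  under eq_bigr do rewrite ht.
  by rewrite sumEFin -EFinM.
split => //; rewrite -e2.
under eq_integral do rewrite EFinM -sumEFin.
rewrite ge0_integralZl //; last 3 first.
- by rewrite ge0_integral_sum // => t w _; rewrite lee_fin.
- by apply: emeasurable_sum => t.
- by move=> w _; apply: sume_ge0 => t _; rewrite lee_fin.
Qed.

Unset Implicit Arguments.
Theorem proposition4 (R : realType) (dO dS : measure_display)
  (Omega : measurableType dO) (S : measurableType dS) (dy : nat)
  (P : probability Omega R) (X : nat -> {mfun Omega >-> S}) (T : nat)
  (pi : probability S R) (F : set (S -> 'rV[R]_dy))
  (r Cchi2 CTV C82 B : R)
  (hr : 0 < r) (hCchi2 : 0 < Cchi2) (hCTV : 0 < CTV) (hC82 : 0 < C82) (hB : 0 < B)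
  (Fmeas : forall f, F f -> forall i : 'I_dy, measurable_fun setT (fun x => f x ord0 i))
  (Fbdd : forall f, F f -> forall x, norm2 (f x) <= B)
  (abscont : forall t, distribution P (X t) `<< pi)
  (hchi2 : forall t, (chi2 (distribution P (X t)) pi <= Cchi2%:E)%E)
  (htv : ((T%:R^-1)%:E * \sum_(t < T) tv (distribution P (X t)) pi <= (CTV * r ^+ 2)%:E)%E)
  (h82 : forall f, F f ->
     (\int[pi]_x (norm2 (f x) ^+ 8)%:E
      <= C82%:E * (\int[pi]_x (norm2 (f x) ^+ 2)%:E) ^+ 4)%E) :
  traj_hypercontractive (sphere P (fun t => X t) T F r) P (fun t => X t) T
    ((1 + Num.sqrt Cchi2) * Num.sqrt C82 * (1 + CTV * B ^+ 2) ^+ 2) 2.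
Proof.
move=> f [Ff L2f].
pose a x := norm2 (f x) ^+ 2.
have n0 x : 0 <= norm2 (f x) by rewrite /norm2 sqrtr_ge0.
have aE x : a x = \sum_(i < dy) f x ord0 i ^+ 2.
  by rewrite /a /norm2 sqr_sqrtr // sumr_ge0 // => i _; rewrite sqr_ge0.
have ma : measurable_fun setT a.
  rewrite (_ : a = fun x => \sum_(i < dy) f x ord0 i ^+ 2); last exact: funext.
  by apply: measurable_sum => i; apply: measurable_funX; exact: Fmeas.
have ab x : 0 <= a x <= B ^+ 2.
  apply/andP; split; first exact: exprn_ge0.
  by apply: lerXn2r; rewrite ?nnegrE ?(ltW hB) //; exact: Fbdd.
have a0 x : 0 <= a x by case/andP: (ab x).
have ma2 : measurable_fun setT (fun x => a x ^+ 2) by exact: measurable_funX.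
have ab2 x : 0 <= a x ^+ 2 <= (B ^+ 2) ^+ 2.
  apply/andP; split; first exact: exprn_ge0.
  by apply: lerXn2r; rewrite ?nnegrE ?exprn_ge0 ?(ltW hB) //; case/andP: (ab x).
have e4 x : norm2 (f x) ^+ 4 = a x ^+ 2 by rewrite /a -exprM.
have e8 x : norm2 (f x) ^+ 8 = a x ^+ 4 by rewrite /a -exprM.
have [L1 L2] := avg_int P X T ma ab.
have [M1 _] := avg_int P X T ma2 ab2.
move: L2f; rewrite /L2norm /L2sq.
rewrite L2 /=.
set v := (T%:R^-1 * _) => vr.
have v0 : 0 <= v.
  rewrite mulr_ge0 ?invr_ge0 // sumr_ge0 // => t _.
  by case/andP: (bnd_int (distribution P (X t)) ma ab).2.
have vE : v = r ^+ 2 by rewrite -vr sqr_sqrtr.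
rewrite /traj_hypercontractive.
under eq_integral do under eq_bigr do rewrite e4.
rewrite M1 L1 -/v vE poweR_EFin powR_mulrn ?exprn_ge0 ?(ltW hr) // -EFinM lee_fin.
have T0 : T%:R != 0 :> R.
  apply/negP => /eqP T0; move: vE; rewrite /v T0 invr0 mul0r => /esym/eqP.
  by rewrite sqrf_eq0 gt_eqF.
have ma4 : measurable_fun setT (fun x => a x ^+ 4) by exact: measurable_funX.
have ab4 x : 0 <= a x ^+ 4 <= (B ^+ 2) ^+ 4.
  apply/andP; split; first exact: exprn_ge0.
  by apply: lerXn2r; rewrite ?nnegrE ?exprn_ge0 ?(ltW hB) //; case/andP: (ab x).
set p1 := fine (\int[pi]_x (a x)%:E).
set p4 := fine (\int[pi]_x (a x ^+ 4)%:E).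
have [p1E /andP[p10 _]] := bnd_int pi ma ab.
have [p4E /andP[p40 _]] := bnd_int pi ma4 ab4.
have h82' : p4 <= C82 * p1 ^+ 4.
  have := h82 f Ff.
  under eq_integral do rewrite e8.
  by rewrite -/p1 -/p4 p1E p4E -EFin_expe -EFinM lee_fin.
have tvE t : tv (distribution P (X t)) pi = (fine (tv (distribution P (X t)) pi))%:E.
  have [t0 t1] := tv_bounds (distribution P (X t)) pi.
  by rewrite fineK // ge0_fin_numE // (le_lt_trans t1 (ltry _)).
have tv0 t : 0 <= fine (tv (distribution P (X t)) pi).
  have [t0 t1] := tv_bounds (distribution P (X t)) pi.
  by rewrite -lee_fin -tvE.
move: htv; under eq_bigr do rewrite tvE.
rewrite sumEFin -EFinM lee_fin => htv.
set K := (1 + Num.sqrt Cchi2) * Num.sqrt C82 * p1 ^+ 2.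
have s1 t : fine (\int[distribution P (X t)]_y (a y ^+ 2)%:E) <= K.
  apply: (opt hCchi2 (ltW hC82) p40 h82') => l1 l2 l10 l20.
  exact: (step1 ma ab (abscont t) (hchi2 t) l10 l20).
have s2 t : p1 <= fine (\int[distribution P (X t)]_y (a y)%:E)
                  + B ^+ 2 * fine (tv (distribution P (X t)) pi).
  have := step2 ma (exprn_ge0 2 (ltW hB)) ab (abscont t).
  by rewrite tvE p1E (bnd_int (distribution P (X t)) ma ab).1 -EFinM -EFinD lee_fin.
have p1b : p1 <= r ^+ 2 * (1 + CTV * B ^+ 2).
  have -> : p1 = T%:R^-1 * \sum_(t < T) p1.
    by rewrite sumr_const card_ord -[p1 *+ T]mulr_natl mulrA mulVf // mul1r.
  apply: (le_trans (y := T%:R^-1 * \sum_(t < T) (fine (\int[distribution P (X t)]_y (a y)%:E)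
                  + B ^+ 2 * fine (tv (distribution P (X t)) pi)))).
    by apply: ler_wpM2l; [rewrite invr_ge0 | apply: ler_sum => t _; exact: s2].
  rewrite big_split /= mulrDr -/v vE -mulr_sumr mulrCA.
  rewrite mulrDr mulr1 lerD2l.
  rewrite (_ : r ^+ 2 * (CTV * B ^+ 2) = B ^+ 2 * (CTV * r ^+ 2)); last by ring.
  by apply: ler_wpM2l => //; rewrite exprn_ge0 ?(ltW hB).
apply: (le_trans (y := T%:R^-1 * \sum_(t < T) K)).
  by apply: ler_wpM2l; [rewrite invr_ge0 | apply: ler_sum => t _; exact: s1].
rewrite sumr_const card_ord -[K *+ T]mulr_natl mulrA mulVf // mul1r /K.
have : p1 ^+ 2 <= (r ^+ 2 * (1 + CTV * B ^+ 2)) ^+ 2.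
  by apply: lerXn2r; rewrite ?nnegrE // (le_trans p10 p1b).
move=> h; rewrite -[X in _ <= X]mulrA [X in _ <= _ * X](_ : _ = (r ^+ 2 * (1 + CTV * B ^+ 2)) ^+ 2); last by ring.
by apply: ler_wpM2l => //; rewrite mulr_ge0 // ?sqrtr_ge0 // addr_ge0 // sqrtr_ge0.
Qed.
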